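(* Let $k\ge 3$ and consider $k$ processes $P_0,\dots,P_{k-1}$ with inputs $v_0,\dots,v_{k-1}$ that are pairwise different, running the following algorithm on a single shared $\text{WRN}_{k}$ object: process $P_i$ performs $t\gets\texttt{WRN}(i,v_i)$ and then decides $t$ if $t\neq\bot$, and decides $v_i$ otherwise. Then in every execution at most $k-1$ distinct values are decided.
   Context: A $\text{WRN}_{k}$ (Write and Read Next) object is a deterministic atomic shared object with a single operation $\texttt{WRN}(i,v)$, where $i\in\{0,\dots,k-1\}$ and $v\neq\bot$. Its state consists of $k$ values $A[0],\dots,A[k-1]$, initially all $\bot$; the operation $\texttt{WRN}(i,v)$ atomically sets $A[i]\gets v$ and returns $A[(i+1)\bmod k]$. Executions are arbitrary asynchronous interleavings of the processes' atomic operations; processes may crash. *)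

(* Defs.v *)
From mathcomp Require Import all_boot.
Set Implicit Arguments. Unset Strict Implicit. Unset Printing Implicit Defensive.

Section WRN.
Variables (k : nat) (V : eqType).

(* State of a WRN_k object: A : 'I_k -> option V, with None standing for bot. *)
Definition wrn_state := 'I_k -> option V.

Definition wrn_init : wrn_state := fun _ => None.

(* WRN(i, x): sets A[i] := x, returns A[(i+1) mod k] (read before the write;
   for k >= 2 the two cells differ, so the order is irrelevant). *)
Definition wrn_write (A : wrn_state) (i : 'I_k) (x : V) : wrn_state :=
  fun j => if j == i then Some x else A j.
Definition wrn_read (A : wrn_state) (i : 'I_k) : option V := A (ordS i).

(* Run the atomic WRN operations of the processes in the linearization
   order s (process i invokes WRN(i, inp i)); returns, in order, each
   invoking process together with the response it got. *)
Fixpoint wrn_run (inp : 'I_k -> V) (A : wrn_state) (s : seq 'I_k)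
  : seq ('I_k * option V) :=
  match s with
  | [::] => [::]
  | i :: s' => (i, wrn_read A i) :: wrn_run inp (wrn_write A i (inp i)) s'
  end.

Definition decision (inp : 'I_k -> V) (p : 'I_k * option V) : V :=
  if p.2 is Some t then t else inp p.1.

(* Values decided in the execution where the processes that take their
   step do so in order s, and exactly the processes in D among them
   complete (decide); the others crash before deciding. Processes not in
   s crash before invoking WRN. *)
Definition decided_values (inp : 'I_k -> V) (s : seq 'I_k) (D : pred 'I_k)
  : seq V :=
  [seq decision inp p | p <- wrn_run inp wrn_init s & p.1 \in D].

End WRN.

(* Main.v *)
Require Import Defs.
From mathcomp Require Import all_boot.
From mathcomp Require Import zify.

Set Implicit Arguments. Unset Strict Implicit. Unset Printing Implicit Defensive.

Section Aux.
Variables (k : nat) (V : eqType) (inp : 'I_k -> V).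

Definition final (A : wrn_state k V) (s : seq 'I_k) :=
  foldl (fun A i => wrn_write A i (inp i)) A s.

Lemma run_rcons A s l :
  wrn_run inp A (rcons s l) = rcons (wrn_run inp A s) (l, wrn_read (final A s) l).
Proof. by elim: s A => [|i s IH] A //=; rewrite IH. Qed.

Lemma final_val A s c :
  final A s c = if c \in s then Some (inp c) else A c.
Proof.
elim: s A => [|i s IH] A //=; rewrite IH in_cons /wrn_write.
case: (c \in s); first by rewrite orbT.
by case: eqP => [->|]; rewrite ?eqxx //= orbF.
Qed.

Lemma run_vals (P : pred 'I_k) A s :
  (forall c v, A c = Some v -> v = inp c /\ P c) ->
  forall p, p \in wrn_run inp A s ->
  exists c, decision inp p = inp c /\ (P c \/ c \in s).
Proof.
elim: s P A => [|i s IH] P A HA p //=.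
rewrite in_cons => /orP [/eqP -> | Hp].
  rewrite /decision /wrn_read /=.
  case E: (A (ordS i)) => [v|].
    by have [-> HP] := HA _ _ E; exists (ordS i); split; [|left].
  by exists i; split; [|right; rewrite in_cons eqxx].
have HA' : forall c v, wrn_write A i (inp i) c = Some v ->
   v = inp c /\ (fun c => P c || (c == i)) c.
  move=> c v; rewrite /wrn_write; case: eqP => [-> [<-]|_ /HA [-> ->]] //.
  by rewrite orbT.
have [c [Hc HPc]] := IH _ _ HA' p Hp.
exists c; split => //; case: HPc => [/orP [H|/eqP ->]|H].
- by left.
- by right; rewrite in_cons eqxx.
- by right; rewrite in_cons H orbT.
Qed.

Lemma init_ok (c : 'I_k) (v : V) : @wrn_init k V c = Some v -> v = inp c /\ pred0 c.
Proof. by []. Qed.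

End Aux.

Theorem corollary8 (k : nat) (V : eqType) (inp : 'I_k -> V) :
  3 <= k ->
  injective inp ->
  forall (s : seq 'I_k) (D : pred 'I_k),
    uniq s ->
    size (undup (decided_values inp s D)) <= k.-1.
Proof.
move=> k3 inj s D us.
suff [x Hx] : exists x, forall v, v \in decided_values inp s D ->
    exists2 c, c != x & v = inp c.
  have -> : k.-1 = size [seq inp c | c <- enum (predC1 x)].
    by rewrite size_map -cardE cardC1 card_ord.
  apply: uniq_leq_size; first exact: undup_uniq.
  move=> v; rewrite mem_undup => /Hx [c cx ->].
  by apply: map_f; rewrite mem_enum.
have decP : forall v, v \in decided_values inp s D ->
    exists2 p, p \in wrn_run inp (@wrn_init k V) s & v = decision inp p.
  by move=> v /mapP [p]; rewrite mem_filter => /andP [_ Hp] ->; exists p.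
case: (pickP (fun x => x \notin s)) => [x xNs | alls].
  exists x => v /decP [p Hp ->].
  have [c [Hc [//|cs]]] := run_vals (@init_ok k V inp) Hp.
  by exists c => //; apply/eqP => E; move: xNs; rewrite -E cs.
have k0 : 0 < k by lia.
have inS : forall c, c \in s by move=> c; have := alls c => /= /negbFE.
case/lastP: s us inS alls decP => [|s' l] us inS _ decP.
  by have := inS (Ordinal k0).
exists l => v /decP [p].
rewrite run_rcons mem_rcons in_cons => /orP [/eqP -> | Hp] ->.
  rewrite /decision /wrn_read /= final_val.
  have Hne : ordS l != l.
    apply/eqP => /(congr1 val) /=; have := ltn_ord l.
    case: (ltnP l.+1 k) => H1 H2.
      by rewrite modn_small //; lia.
    have -> : l.+1 = k by lia.
    by rewrite modnn; lia.
  have -> : ordS l \in s'.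
    by have := inS (ordS l); rewrite mem_rcons in_cons (negbTE Hne).
  by exists (ordS l).
have [c [Hc [//|cs]]] := run_vals (@init_ok k V inp) Hp.
exists c => //; apply/eqP => E.
by move: us; rewrite rcons_uniq -E cs.
Qed.
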